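(* Let $G$ be a countable discrete group acting amenably by homeomorphisms on the Cantor space $D^{\aleph_0}=\{0,1\}^{\mathbb N}$. Then there exists a sequence of continuous maps $b^n\colon D^{\aleph_0}\to\mathbb P(G)$, each with finite image, such that for every $g\in G$, $\lim_{n\to\infty}\sup_{x\in D^{\aleph_0}}\|g b^n_x-b^n_{gx}\|_1=0$.
   Context: $\mathbb P(G)=\{b\colon G\to[0,1] : \sum_{g}b(g)=1\}\subset\ell^1(G)$ with the weak* topology and action $(gb)(h)=b(g^{-1}h)$. An action of $G$ on a compact space $X$ is amenable if there is a sequence of continuous maps $b^n\colon X\to\mathbb P(G)$ such that for every $g\in G$, $\lim_{n}\sup_{x\in X}\|g b^n_x-b^n_{gx}\|_1=0$. *)

(* Defs.v *)
From Stdlib Require Import Reals List.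
Import ListNotations.
Open Scope R_scope.

Definition is_group {G : Type} (mul : G -> G -> G) (inv : G -> G) (e : G) : Prop :=
  (forall a b c, mul (mul a b) c = mul a (mul b c)) /\
  (forall a, mul e a = a) /\ (forall a, mul a e = a) /\
  (forall a, mul (inv a) a = e) /\ (forall a, mul a (inv a) = e).

Definition countable (G : Type) : Prop :=
  exists enum : nat -> G, forall g, exists n, enum n = g.

Definition Cantor := nat -> bool.

Definition agree_upto (M : nat) (x y : Cantor) : Prop :=
  forall i, (i < M)%nat -> x i = y i.

Definition cantor_continuous (f : Cantor -> Cantor) : Prop :=
  forall x N, exists M, forall y, agree_upto M x y -> agree_upto N (f x) (f y).

Definition is_action {G : Type} (mul : G -> G -> G) (e : G)
  (act : G -> Cantor -> Cantor) : Prop :=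
  (forall x, act e x = x) /\
  (forall g h x, act (mul g h) x = act g (act h x)) /\
  (forall g, cantor_continuous (act g)).

Fixpoint sum_list {G : Type} (f : G -> R) (l : list G) : R :=
  match l with [] => 0 | a :: l' => f a + sum_list f l' end.

(* f is (unconditionally) summable over G with sum s *)
Definition has_sum {G : Type} (f : G -> R) (s : R) : Prop :=
  forall eps, eps > 0 -> exists l0 : list G, NoDup l0 /\
    forall l, NoDup l -> incl l0 l -> Rabs (sum_list f l - s) < eps.

Definition l1norm_le {G : Type} (f : G -> R) (c : R) : Prop :=
  forall l : list G, NoDup l -> sum_list (fun g => Rabs (f g)) l <= c.

Definition in_PG {G : Type} (b : G -> R) : Prop :=
  (forall g, 0 <= b g /\ b g <= 1) /\ has_sum b 1.

(* c_0(G): functions vanishing at infinity (predual of l^1(G)) *)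
Definition in_c0 {G : Type} (f : G -> R) : Prop :=
  forall eps, eps > 0 -> exists l : list G,
    forall g, ~ In g l -> Rabs (f g) < eps.

(* continuity of b : Cantor -> l^1(G) for the weak* topology sigma(l^1, c_0):
   for every f in c_0, x |-> <f, b_x> = sum_g f g * b_x g is continuous *)
Definition weakstar_continuous {G : Type} (b : Cantor -> G -> R) : Prop :=
  forall f : G -> R, in_c0 f ->
  forall x eps, eps > 0 -> exists M, forall y, agree_upto M x y ->
    forall s t, has_sum (fun g => f g * b x g) s ->
                has_sum (fun g => f g * b y g) t -> Rabs (s - t) < eps.

Definition translate {G : Type} (mul : G -> G -> G) (inv : G -> G)
  (g : G) (b : G -> R) : G -> R := fun h => b (mul (inv g) h).

Definition asymptotically_invariant {G : Type} (mul : G -> G -> G) (inv : G -> G)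
  (act : G -> Cantor -> Cantor) (b : nat -> Cantor -> G -> R) : Prop :=
  forall g eps, eps > 0 -> exists N, forall n, (n >= N)%nat -> forall x,
    l1norm_le (fun h => translate mul inv g (b n x) h - b n (act g x) h) eps.

Definition amenable_action {G : Type} (mul : G -> G -> G) (inv : G -> G)
  (act : G -> Cantor -> Cantor) : Prop :=
  exists b : nat -> Cantor -> G -> R,
    (forall n x, in_PG (b n x)) /\
    (forall n, weakstar_continuous (b n)) /\
    asymptotically_invariant mul inv act b.

Definition finite_image {G : Type} (c : Cantor -> G -> R) : Prop :=
  exists L : list (G -> R), forall x, exists f, In f L /\ forall g, c x g = f g.

(* Main.v *)
Require Import Defs.
From Stdlib Require Import Reals List Lra Lia Classical ClassicalEpsilon FunctionalExtensionality.
Import ListNotations.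
Open Scope R_scope.

Definition dec {G : Type} : forall x y : G, {x = y} + {x <> y} :=
  fun x y => excluded_middle_informative (x = y).
Definition inb {G : Type} (A : list G) (g : G) : bool :=
  if in_dec dec g A then true else false.
Definition ind {G : Type} (A : list G) (g : G) : R :=
  if in_dec dec g A then 1 else 0.

Lemma inb_true {G : Type} (A : list G) g : inb A g = true <-> In g A.
Proof. unfold inb; destruct (in_dec dec g A); split; intros; auto; discriminate. Qed.

Lemma sum_app {G : Type} (f : G -> R) l1 l2 :
  sum_list f (l1 ++ l2) = sum_list f l1 + sum_list f l2.
Proof. induction l1; simpl; [lra|rewrite IHl1; lra]. Qed.

Lemma sum_le {G : Type} (f f' : G -> R) l :
  (forall g, In g l -> f g <= f' g) -> sum_list f l <= sum_list f' l.
Proof.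
  induction l; simpl; intros H; [lra|].
  assert (f a <= f' a) by (apply H; auto).
  assert (sum_list f l <= sum_list f' l) by (apply IHl; intros; apply H; auto). lra.
Qed.

Lemma sum_ext {G : Type} (f f' : G -> R) l :
  (forall g, In g l -> f g = f' g) -> sum_list f l = sum_list f' l.
Proof.
  intros H; apply Rle_antisym; apply sum_le; intros g Hg; rewrite (H g Hg); lra.
Qed.

Lemma sum_plus {G : Type} (f f' : G -> R) l :
  sum_list (fun g => f g + f' g) l = sum_list f l + sum_list f' l.
Proof. induction l; simpl; [lra|rewrite IHl; lra]. Qed.

Lemma sum_nonneg {G : Type} (f : G -> R) l :
  (forall g, 0 <= f g) -> 0 <= sum_list f l.
Proof. intros H; induction l; simpl; [lra|specialize (H a); lra]. Qed.

Lemma sum_remove_le {G : Type} (f : G -> R) a l :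
  (forall g, 0 <= f g) -> sum_list f (remove dec a l) <= sum_list f l.
Proof.
  intros H; induction l; simpl; [lra|].
  destruct (dec a a0); simpl; specialize (H a0); lra.
Qed.

Lemma sum_remove {G : Type} (f : G -> R) a l :
  (forall g, 0 <= f g) -> In a l -> f a + sum_list f (remove dec a l) <= sum_list f l.
Proof.
  intros H; induction l; simpl; [tauto|]. intros [E|I].
  - subst. destruct (dec a a); [|congruence].
    pose proof (sum_remove_le f a l H). lra.
  - destruct (dec a a0).
    + subst. pose proof (sum_remove_le f a0 l H). specialize (H a0). lra.
    + simpl. specialize (IHl I). lra.
Qed.

Lemma sum_sub {G : Type} (f : G -> R) l1 l2 :
  (forall g, 0 <= f g) -> NoDup l1 -> incl l1 l2 -> sum_list f l1 <= sum_list f l2.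
Proof.
  intros H; revert l2; induction l1 as [|a l1 IH]; intros l2 ND Inc; simpl.
  - apply sum_nonneg; auto.
  - apply NoDup_cons_iff in ND as [Na ND].
    assert (Ia : In a l2) by (apply Inc; simpl; auto).
    pose proof (sum_remove f a l2 H Ia).
    assert (sum_list f l1 <= sum_list f (remove dec a l2)).
    { apply IH; auto. intros g Hg. apply in_in_remove.
      - intro; subst; auto.
      - apply Inc; simpl; auto. }
    lra.
Qed.

Lemma sum_filter {G : Type} (f : G -> R) (p : G -> bool) l :
  sum_list f l = sum_list f (filter p l) + sum_list f (filter (fun g => negb (p g)) l).
Proof. induction l; simpl; [lra|]. destruct (p a); simpl; rewrite IHl; lra. Qed.

Lemma sum_const {G : Type} (f : G -> R) c l :
  (forall g, In g l -> f g <= c) -> sum_list f l <= INR (length l) * c.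
Proof.
  induction l; intros H; [simpl; lra|].
  change (length (a::l)) with (S (length l)). rewrite S_INR. simpl sum_list. assert (f a <= c) by (apply H; left; auto).
  assert (sum_list f l <= INR (length l) * c) by (apply IHl; intros; apply H; right; auto). lra.
Qed.

Lemma merge {G : Type} (l0 l1 : list G) : NoDup l0 -> NoDup l1 ->
  exists l, NoDup l /\ incl l0 l /\ incl l1 l /\ l = l0 ++ filter (fun g => negb (inb l0 g)) l1.
Proof.
  intros N0 N1. exists (l0 ++ filter (fun g => negb (inb l0 g)) l1). repeat split.
  - apply NoDup_app; auto. apply NoDup_filter; auto.
    intros a Ha Hb. apply filter_In in Hb as [_ Hb].
    assert (inb l0 a = true) by (apply inb_true; auto). rewrite H in Hb; discriminate.
  - intros g Hg; apply in_or_app; auto.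
  - intros g Hg. apply in_or_app. destruct (inb l0 g) eqn:E.
    + left; apply inb_true; auto.
    + right; apply filter_In; rewrite E; auto.
Qed.

Lemma PG_le1 {G : Type} (b : G -> R) l : in_PG b -> NoDup l -> sum_list b l <= 1.
Proof.
  intros [Hb Hs] ND. apply Rnot_lt_le; intro Hlt.
  destruct (Hs ((sum_list b l - 1)/2)) as [l0 [N0 H0]]; [lra|].
  destruct (merge l l0 ND N0) as [l' [N' [I1 [I2 _]]]].
  specialize (H0 l' N' I2).
  assert (sum_list b l <= sum_list b l') by (apply sum_sub; auto; intros; apply Hb).
  apply Rabs_def2 in H0. lra.
Qed.

Lemma has_sum_unique {G : Type} (f : G -> R) s t : has_sum f s -> has_sum f t -> s = t.
Proof.
  intros Hs Ht. destruct (Req_dec s t) as [|Hne]; auto. exfalso.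
  assert (P : Rabs (s - t) / 2 > 0) by (apply Rdiv_lt_0_compat; [apply Rabs_pos_lt; lra|lra]).
  destruct (Hs _ P) as [l0 [N0 H0]]. destruct (Ht _ P) as [l1 [N1 H1]].
  destruct (merge l0 l1 N0 N1) as [l [N [I0 [I1 _]]]].
  specialize (H0 l N I0). specialize (H1 l N I1).
  pose proof (Rabs_triang (sum_list f l - t) (s - sum_list f l)).
  replace (sum_list f l - t + (s - sum_list f l)) with (s - t) in H by ring.
  rewrite Rabs_minus_sym in H0. lra.
Qed.

Lemma ind_has_sum {G : Type} (A : list G) (q : G -> R) :
  NoDup A -> (forall g, 0 <= q g) -> has_sum (fun h => ind A h * q h) (sum_list q A).
Proof.
  intros NA Hq eps Heps. exists A. split; auto. intros l N I.
  assert (Hn : forall g, 0 <= ind A g * q g).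
  { intro g; unfold ind; destruct (in_dec dec g A); specialize (Hq g); nra. }
  assert (E1 : sum_list (fun h => ind A h * q h) A = sum_list q A).
  { apply sum_ext; intros g Hg; unfold ind; destruct (in_dec dec g A); [ring|contradiction]. }
  assert (L1 : sum_list (fun h => ind A h * q h) A <= sum_list (fun h => ind A h * q h) l)
    by (apply sum_sub; auto).
  rewrite (sum_filter _ (inb A) l) in *.
  assert (Z : sum_list (fun h => ind A h * q h) (filter (fun g => negb (inb A g)) l) = 0).
  { transitivity (sum_list (fun _ => 0) (filter (fun g => negb (inb A g)) l)).
    - apply sum_ext; intros g Hg. apply filter_In in Hg as [_ Hg].
      unfold ind; destruct (in_dec dec g A); [|ring].
      assert (inb A g = true) by (apply inb_true; auto). rewrite H in Hg; discriminate.
    - clear. induction (filter _ l); simpl; lra. }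
  assert (L2 : sum_list (fun h => ind A h * q h) (filter (inb A) l) <=
               sum_list (fun h => ind A h * q h) A).
  { apply sum_sub; auto. apply NoDup_filter; auto.
    intros g Hg; apply filter_In in Hg as [_ Hg]; apply inb_true; auto. }
  rewrite Z in *.
  replace (sum_list (fun h => ind A h * q h) (filter (inb A) l) + 0 - sum_list q A) with 0 by lra.
  rewrite Rabs_R0; lra.
Qed.

Lemma agree_mono M M' x y : (M' <= M)%nat -> agree_upto M x y -> agree_upto M' x y.
Proof. intros Hm H i Hi; apply H; lia. Qed.

Definition setb (w : Cantor) (k : nat) (c : bool) : Cantor :=
  fun i => if Nat.eqb i k then c else w i.

Definition Bad (Q : Cantor -> Cantor -> Prop) (k : nat) (w : Cantor) : Prop :=
  forall M, exists y z, agree_upto k w y /\ agree_upto M y z /\ ~ Q y z.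

Lemma Bad_step Q k w : Bad Q k w -> Bad Q (S k) (setb w k false) \/ Bad Q (S k) (setb w k true).
Proof.
  intros HB. apply NNPP; intro Hn. apply not_or_and in Hn as [H0 H1].
  apply not_all_ex_not in H0 as [M0 H0]. apply not_all_ex_not in H1 as [M1 H1].
  destruct (HB (Nat.max M0 M1)) as [y [z [A1 [A2 A3]]]].
  assert (Hag : forall c, y k = c -> agree_upto (S k) (setb w k c) y).
  { intros c Hc i Hi. unfold setb. destruct (Nat.eqb_spec i k); [subst; auto|apply A1; lia]. }
  destruct (y k) eqn:E.
  - apply H1. exists y, z. split; [apply Hag; auto|split; auto].
    apply (agree_mono (Nat.max M0 M1)); [lia|auto].
  - apply H0. exists y, z. split; [apply Hag; auto|split; auto].
    apply (agree_mono (Nat.max M0 M1)); [lia|auto].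
Qed.

Definition stepf Q k w : Cantor :=
  if excluded_middle_informative (Bad Q (S k) (setb w k false)) then setb w k false
  else setb w k true.

Fixpoint ws Q (k : nat) : Cantor :=
  match k with 0 => fun _ => false | S k => stepf Q k (ws Q k) end.



Lemma ws_bad Q : (forall M, exists y z, agree_upto M y z /\ ~ Q y z) -> forall k, Bad Q k (ws Q k).
Proof.
  intros H0 k; induction k; simpl.
  - intros M. destruct (H0 M) as [y [z [A B]]]. exists y, z. split; auto. intros i Hi; lia.
  - unfold stepf. destruct (excluded_middle_informative _); auto.
    destruct (Bad_step _ _ _ IHk); tauto.
Qed.

Lemma ws_agree Q k i : (i < k)%nat -> ws Q (S k) i = ws Q k i.
Proof.
  intros Hi; simpl; unfold stepf; destruct (excluded_middle_informative _); unfold setb;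
  destruct (Nat.eqb_spec i k); auto; lia.
Qed.

Lemma ws_agree2 Q k m i : (i < k)%nat -> (k <= m)%nat -> ws Q m i = ws Q k i.
Proof.
  intros Hi Hm; induction Hm; auto. rewrite ws_agree; auto; lia.
Qed.

Lemma fan (Q : Cantor -> Cantor -> Prop) :
  (forall x, exists M, forall y z, agree_upto M x y -> agree_upto M x z -> Q y z) ->
  exists M, forall y z, agree_upto M y z -> Q y z.
Proof.
  intros H. apply NNPP; intro Hn.
  assert (H0 : forall M, exists y z, agree_upto M y z /\ ~ Q y z).
  { intros M. apply NNPP; intro H1. apply Hn. exists M. intros y z A.
    apply NNPP; intro H2. apply H1. exists y, z; split; auto. }
  set (x := fun i => ws Q (S i) i).
  destruct (H x) as [M HM].
  destruct (ws_bad Q H0 M M) as [y [z [A1 [A2 A3]]]].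
  assert (Ax : agree_upto M x (ws Q M)).
  { intros i Hi. unfold x. symmetry. apply ws_agree2; lia. }
  apply A3. apply HM.
  - intros i Hi. rewrite Ax; auto.
  - intros i Hi. rewrite Ax, A1, A2; auto.
Qed.

Lemma ind_c0 {G : Type} (A : list G) : in_c0 (ind A).
Proof.
  intros eps He. exists A. intros g Hg. unfold ind. destruct (in_dec dec g A); [contradiction|].
  rewrite Rabs_R0; lra.
Qed.

Lemma pointwise {G : Type} (b : Cantor -> G -> R) x eta :
  (forall x, in_PG (b x)) -> weakstar_continuous b -> eta > 0 ->
  forall A : list G, exists M, forall y, agree_upto M x y ->
    forall g, In g A -> Rabs (b x g - b y g) < eta.
Proof.
  intros Hpg Hw He A. induction A as [|a A [M IH]].
  - exists 0%nat. intros y _ g [].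
  - destruct (Hw (ind [a]) (ind_c0 [a]) x eta He) as [Ma Ha].
    exists (Nat.max M Ma). intros y Ay g [Eg|Ig].
    + subst g. 
      assert (S1 := ind_has_sum [a] (b x) (NoDup_cons a (fun h : In a [] => h) (NoDup_nil G))
                     (fun g => proj1 (proj1 (Hpg x) g))).
      assert (S2 := ind_has_sum [a] (b y) (NoDup_cons a (fun h : In a [] => h) (NoDup_nil G))
                     (fun g => proj1 (proj1 (Hpg y) g))).
      specialize (Ha y (agree_mono _ _ _ _ (Nat.le_max_r _ _) Ay) _ _ S1 S2).
      simpl in Ha. replace (b x a - b y a) with (b x a + 0 - (b y a + 0)) by ring. auto.
    + apply (IH y); auto. apply (agree_mono (Nat.max M Ma)); auto; lia.
Qed.

Lemma l1_cont {G : Type} (b : Cantor -> G -> R) :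
  (forall x, in_PG (b x)) -> weakstar_continuous b ->
  forall x d, d > 0 -> exists M, forall y, agree_upto M x y ->
    l1norm_le (fun h => b x h - b y h) d.
Proof.
  intros Hpg Hw x d Hd.
  destruct (proj2 (Hpg x) (d/4)) as [l0 [N0 H0]]; [lra|].
  specialize (H0 l0 N0 (incl_refl _)). apply Rabs_def2 in H0.
  set (K := INR (length l0)).
  assert (HK : 0 <= K) by apply pos_INR.
  set (eta := d / (8 * (K + 1))).
  assert (Heta : eta > 0) by (unfold eta; apply Rdiv_lt_0_compat; lra).
  assert (Keta : (K + 1) * eta = d / 8) by (unfold eta; field; lra).
  destruct (Hw (ind l0) (ind_c0 l0) x eta Heta) as [M0 HM0].
  destruct (pointwise b x eta Hpg Hw Heta l0) as [M1 HM1].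
  exists (Nat.max M0 M1). intros y Ay l Nl.
  set (p := b x) in *. set (q := b y).
  assert (Hp : forall g, 0 <= p g) by (intro; apply (proj1 (Hpg x) g)).
  assert (Hq : forall g, 0 <= q g) by (intro; apply (proj1 (Hpg y) g)).
  assert (Sd : Rabs (sum_list p l0 - sum_list q l0) < eta).
  { apply (HM0 y); [apply (agree_mono (Nat.max M0 M1)); auto; lia| |];
    apply ind_has_sum; auto. }
  assert (Pw : forall g, In g l0 -> Rabs (p g - q g) < eta).
  { apply HM1. apply (agree_mono (Nat.max M0 M1)); auto; lia. }
  rewrite (sum_filter _ (inb l0) l).
  set (l1 := filter (inb l0) l). set (l2 := filter (fun g => negb (inb l0 g)) l).
  assert (Dis : forall a, In a l0 -> ~ In a l2).
  { intros a Ha Hb. unfold l2 in Hb. apply filter_In in Hb as [_ Hb].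
    assert (inb l0 a = true) by (apply inb_true; auto). rewrite H in Hb; discriminate. }
  assert (N2 : NoDup l2) by (apply NoDup_filter; auto).
  assert (ND : NoDup (l0 ++ l2)) by (apply NoDup_app; auto).
  assert (B1 : sum_list (fun h => Rabs (p h - q h)) l1 <= K * eta).
  { apply Rle_trans with (sum_list (fun h => Rabs (p h - q h)) l0).
    - apply sum_sub; [intros; apply Rabs_pos|apply NoDup_filter; auto|].
      intros g Hg; unfold l1 in Hg; apply filter_In in Hg as [_ Hg]; apply inb_true; auto.
    - apply sum_const. intros g Hg; left; auto. }
  assert (Pp := PG_le1 p _ (Hpg x) ND). rewrite sum_app in Pp.
  assert (Pq := PG_le1 q _ (Hpg y) ND). rewrite sum_app in Pq.
  assert (B2 : sum_list (fun h => Rabs (p h - q h)) l2 <= sum_list p l2 + sum_list q l2).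
  { rewrite <- sum_plus. apply sum_le. intros g _. specialize (Hp g); specialize (Hq g).
    apply Rabs_le; lra. }
  apply Rabs_def2 in Sd. lra.
Qed.

Lemma unif_cont {G : Type} (b : Cantor -> G -> R) :
  (forall x, in_PG (b x)) -> weakstar_continuous b ->
  forall d, d > 0 -> exists M, forall y z, agree_upto M y z ->
    l1norm_le (fun h => b y h - b z h) d.
Proof.
  intros Hpg Hw d Hd. apply fan. intros x.
  destruct (l1_cont b Hpg Hw x (d/2)) as [M HM]; [lra|]. exists M.
  intros y z Ay Az l Nl.
  pose proof (HM y Ay l Nl) as H1. pose proof (HM z Az l Nl) as H2.
  apply Rle_trans with (sum_list (fun h => Rabs (b x h - b y h)) l + sum_list (fun h => Rabs (b x h - b z h)) l); [|lra].
  rewrite <- sum_plus. apply sum_le. intros g _.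
  rewrite (Rabs_minus_sym (b x g)). 
  replace (b y g - b z g) with ((b y g - b x g) + (b x g - b z g)) by ring. apply Rabs_triang.
Qed.

Lemma sum_map {G : Type} (f : G -> R) (k : G -> G) l :
  sum_list f (map k l) = sum_list (fun h => f (k h)) l.
Proof. induction l; simpl; [lra|rewrite IHl; lra]. Qed.

Lemma NoDup_map_inj {G : Type} (k : G -> G) l :
  (forall a b, k a = k b -> a = b) -> NoDup l -> NoDup (map k l).
Proof.
  intros Hk N; induction N; simpl; constructor; auto.
  intro Hin. apply in_map_iff in Hin as [y [E Iy]]. apply Hk in E; subst; auto.
Qed.

Lemma translate_norm {G : Type} (mul : G -> G -> G) (inv : G -> G) (e : G)
  (HG : is_group mul inv e) g (u v : G -> R) c :
  l1norm_le (fun h => u h - v h) c ->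
  l1norm_le (fun h => translate mul inv g u h - translate mul inv g v h) c.
Proof.
  intros H l N. unfold translate.
  rewrite <- (sum_map (fun h => Rabs (u h - v h)) (mul (inv g))).
  apply H. apply NoDup_map_inj; auto.
  destruct HG as [As [Le [Re [Li Ri]]]].
  intros a b E. rewrite <- (Le a), <- (Le b), <- (Ri g), !As, E; auto.
Qed.

Definition trunc (M : nat) (x : Cantor) : Cantor := fun i => if Nat.ltb i M then x i else false.

Fixpoint cl (M : nat) : list Cantor :=
  match M with
  | 0 => [fun _ => false]
  | S M => flat_map (fun c => [c; setb c M true]) (cl M)
  end.

Lemma cl_spec M x : In (trunc M x) (cl M).
Proof.
  induction M; simpl.
  - left. apply functional_extensionality; intro i; unfold trunc; destruct i; reflexivity.
  - apply in_flat_map. exists (trunc M x). split; auto.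
    destruct (x M) eqn:E.
    + right; left. apply functional_extensionality; intro i; unfold trunc, setb.
      destruct (Nat.eqb_spec i M); [subst; rewrite E; destruct (Nat.ltb_spec M (S M)); auto; lia|].
      destruct (Nat.ltb_spec i M), (Nat.ltb_spec i (S M)); auto; lia.
    + left. apply functional_extensionality; intro i; unfold trunc.
      destruct (Nat.eqb_spec i M); [subst; rewrite E; destruct (M <? M), (M <? S M); reflexivity|].
      destruct (Nat.ltb_spec i M), (Nat.ltb_spec i (S M)); auto; lia.
Qed.

Lemma trunc_agree M x : agree_upto M x (trunc M x).
Proof. intros i Hi; unfold trunc; destruct (Nat.ltb_spec i M); auto; lia. Qed.

Lemma trunc_eq M x y : agree_upto M x y -> trunc M x = trunc M y.
Proof.
  intros H; apply functional_extensionality; intro i; unfold trunc.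
  destruct (Nat.ltb_spec i M); auto.
Qed.

Lemma l1_tri {G : Type} (a b c d : G -> R) e1 e2 e3 :
  l1norm_le (fun h => a h - b h) e1 -> l1norm_le (fun h => b h - c h) e2 ->
  l1norm_le (fun h => c h - d h) e3 -> l1norm_le (fun h => a h - d h) (e1 + e2 + e3).
Proof.
  intros H1 H2 H3 l N. specialize (H1 l N); specialize (H2 l N); specialize (H3 l N).
  apply Rle_trans with (sum_list (fun h => Rabs (a h - b h)) l + sum_list (fun h => Rabs (b h - c h)) l
     + sum_list (fun h => Rabs (c h - d h)) l); [|lra].
  rewrite <- !sum_plus. apply sum_le. intros g _.
  replace (a g - d g) with ((a g - b g) + (b g - c g) + (c g - d g)) by ring.
  eapply Rle_trans; [apply Rabs_triang|].
  pose proof (Rabs_triang (a g - b g) (b g - c g)). lra.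
Qed.

Theorem lemma3p3p5 (G : Type) (mul : G -> G -> G) (inv : G -> G) (e : G)
  (act : G -> Cantor -> Cantor)
  (HG : is_group mul inv e) (Hcount : countable G)
  (Hact : is_action mul e act)
  (Hamen : amenable_action mul inv act) :
  exists b : nat -> Cantor -> G -> R,
    (forall n x, in_PG (b n x)) /\
    (forall n, weakstar_continuous (b n)) /\
    (forall n, finite_image (b n)) /\
    asymptotically_invariant mul inv act b.
Proof.
  destruct Hamen as [b [Hpg [Hw Hinv]]].
  assert (HM : forall n, exists M, forall y z, agree_upto M y z ->
             l1norm_le (fun h => b n y h - b n z h) (/ INR (S n))).
  { intro n. apply unif_cont; auto. apply Rinv_0_lt_compat, lt_0_INR; lia. }
  set (Mf := fun n => proj1_sig (constructive_indefinite_description _ (HM n))).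
  assert (HMf : forall n y z, agree_upto (Mf n) y z ->
             l1norm_le (fun h => b n y h - b n z h) (/ INR (S n))).
  { intro n. exact (proj2_sig (constructive_indefinite_description _ (HM n))). }
  exists (fun n x => b n (trunc (Mf n) x)). split; [|split; [|split]].
  - intros n x; apply Hpg.
  - intros n f Hf x eps He. exists (Mf n). intros y A s t Hs Ht.
    rewrite (trunc_eq _ _ _ A) in Hs. rewrite (has_sum_unique _ _ _ Hs Ht).
    unfold Rminus; rewrite Rplus_opp_r, Rabs_R0; lra.
  - intros n. exists (map (b n) (cl (Mf n))). intro x. exists (b n (trunc (Mf n) x)). split; auto.
    apply in_map, cl_spec.
  - intros g eps He.
    destruct (Hinv g (eps/3)) as [N1 HN1]; [lra|].
    destruct (archimed_cor1 (eps/3)) as [N2 [HN2 HN2']]; [lra|].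
    exists (Nat.max N1 N2). intros n Hn x.
    assert (Hd : / INR (S n) <= eps/3).
    { apply Rle_trans with (/ INR N2); [|lra].
      apply Rinv_le_contravar; [apply lt_0_INR; auto|apply le_INR; lia]. }
    assert (E : eps = / INR (S n) + eps/3 + / INR (S n) + (2*(eps/3 - / INR (S n)))) by lra.
    intros l Nl.
    assert (T := l1_tri
      (translate mul inv g (b n (trunc (Mf n) x)))
      (translate mul inv g (b n x))
      (b n (act g x)) (b n (trunc (Mf n) (act g x))) _ _ _
      (translate_norm mul inv e HG g _ _ _ (HMf n _ _ (fun i Hi => eq_sym (trunc_agree _ x i Hi))))
      (HN1 n ltac:(lia) x)
      (HMf n _ _ (trunc_agree _ _)) l Nl).
    lra.
Qed.
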